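(* Let $\sigma$ be an admissible permutation on $\mathbb{Z}$ and $r=(\ldots,r_{-1},r_0,r_1,\ldots)$ be its standard record representation. For any $n\in\mathbb{N}$, let $\sigma_n=(\sigma(-n),\ldots,\sigma(n-1),\sigma(n))$ be the restriction of $\sigma$ to $\llbracket -n,n\rrbracket$ and let $s_n$ be the number of records of $\sigma_n$ smaller or equal than $0$. Then, for any finite $I\subseteq\mathbb{Z}$, there exists $n_0$ such that, for all $n\geq n_0$ we have \begin{align*} \mathrm{RBST}(\sigma)\cap\left(\bigcup_{k\in I}\mathbf{1}^k\mathbb{T}_L\right)=\mathbf{1}^{-s_n}\mathrm{BST}(\sigma_n)\cap\left(\bigcup_{k\in I}\mathbf{1}^k\mathbb{T}_L\right)\,. \end{align*} In words, the redwood tree $\mathrm{RBST}(\sigma)$ and the shifted binary search tree $\mathbf{1}^{-s_n}\mathrm{BST}(\sigma_n)$ are locally equal for $n$ large enough.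
   Context: Notation: $\mathbb{T}=\{\emptyset\}\cup\bigcup_{k\geq1}\{\mathbf{0},\mathbf{1}\}^k$ is the infinite binary tree seen as words on $\{\mathbf{0},\mathbf{1}\}$ ($\emptyset$ = root = empty word); binary trees are prefix-closed subsets of $\mathbb{T}$. For a finite sequence $x=(x_1,\ldots,x_n)$ of distinct values, its binary search tree is $\mathrm{BST}(x)=\emptyset$ if $n=0$, and otherwise $\mathrm{BST}(x)=\{\emptyset\}\cup\mathbf{0}\,\mathrm{BST}(x_-)\cup\mathbf{1}\,\mathrm{BST}(x_+)$, where $x_-$ (resp. $x_+$) is the subsequence of values smaller (resp. larger) than $x_1$, in the same order. A new letter $\Upsilon$ is added as the inverse of $\mathbf{1}$, with the convention $\mathbf{1}^k=\Upsilon^{|k|}$ for $k<0$ and $\mathbf{1}^0=\emptyset$ (so $\mathbf{1}^a\mathbf{1}^b=\mathbf{1}^{a+b}$ for $a,b\in\mathbb{Z}$); $\mathbb{T}_L:=\{\emptyset\}\cup\mathbf{0}\mathbb{T}$ and $\mathbb{Y}:=\bigcup_{k\in\mathbb{Z}}\mathbf{1}^k\mathbb{T}_L$. For $a,b\in\mathbb{Z}$, $\llbracket a,b\rrbracket=\{a,a+1,\ldots,b\}$. A permutation $\sigma$ of $\mathbb{Z}$ is admissible if $|\{i\in\mathbb{N}:\sigma(i)\notin\mathbb{N}\}|+|\{i\in\mathbb{Z}\setminus\mathbb{N}:\sigma(i)\in\mathbb{N}\}|<\infty$. A record index of $\sigma$ is an index $r$ such that $\sigma(r)>\sigma(k)$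 for all $k<r$ ($\sigma(r)$ is then a record); for an admissible $\sigma$ the set of record indices is infinite in both directions. The standard record representation of $\sigma$ is the sequence $(\ldots,r_{-1},r_0,r_1,\ldots)$ listing all record indices of $\sigma$ in strictly increasing order, indexed so that $\sigma(r_0)\leq0<\sigma(r_1)$. For $k\in\mathbb{Z}$, $\sigma[k]=(\sigma(i):\sigma(r_k)<\sigma(i)<\sigma(r_{k+1}))$ is the sequence of images between two consecutive records, in the same order as in $\sigma$. The redwood tree of $\sigma$ is $\mathrm{RBST}(\sigma):=\bigcup_{k\in\mathbb{Z}}\{\mathbf{1}^k\}\cup\mathbf{1}^k\mathbf{0}\,\mathrm{BST}(\sigma[k])\subseteq\mathbb{Y}$. *)

(* Defs.v *)
From mathcomp Require Import all_boot all_order all_algebra.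
Set Implicit Arguments. Unset Strict Implicit. Unset Printing Implicit Defensive.
Import Order.TTheory GRing.Theory Num.Theory.
Local Open Scope ring_scope.

(* Binary trees are sets of words over {0,1}; a word is a [seq bool] with
   [false] = letter 0 and [true] = letter 1; the root is the empty word. *)

Fixpoint in_bst (x : seq int) (w : seq bool) {struct w} : bool :=
  match x with
  | [::] => false
  | a :: t =>
    match w with
    | [::] => true
    | b :: w' =>
        in_bst (if b then [seq y <- t | a < y] else [seq y <- t | y < a]) w'
    end
  end.

(* Elements of Y = U_{k in Z} 1^k T_L in normal form: (k, None) stands for the
   word 1^k, and (k, Some w) stands for the word 1^k 0 w (k in Z, w in T). *)
Definition Yword := (int * option (seq bool))%type.

Definition yword (k : nat) (o : option (seq bool)) : seq bool :=
  nseq k true ++ (match o with None => [::] | Some w => false :: w end).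

Definition admissible (sigma : int -> int) : Prop :=
  exists s : seq int, forall i : int,
    ((0 <= i) && (sigma i < 0)) || ((i < 0) && (0 <= sigma i)) -> i \in s.

Definition is_record_index (sigma : int -> int) (r : int) : Prop :=
  forall k : int, k < r -> sigma k < sigma r.

Definition std_record_rep (sigma : int -> int) (r : int -> int) : Prop :=
  (forall k : int, r k < r (k + 1)) /\
  (forall k : int, is_record_index sigma (r k)) /\
  (forall i : int, is_record_index sigma i -> exists k : int, r k = i) /\
  sigma (r 0) <= 0 < sigma (r 1).

Definition values_between (sigma : int -> int) (lo hi : int) (xs : seq int)
  : Prop :=
  exists idx : seq int,
    sorted (fun a b : int => a < b) idx /\
    (forall i : int, (i \in idx) = (lo < sigma i < hi)) /\
    xs = map sigma idx.

Definition sigma_block (sigma r : int -> int) (k : int) (xs : seq int) : Prop :=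
  values_between sigma (sigma (r k)) (sigma (r (k + 1))) xs.

Definition RBST (sigma r : int -> int) (y : Yword) : Prop :=
  match y.2 with
  | None => True
  | Some w => exists xs, sigma_block sigma r y.1 xs /\ in_bst xs w
  end.

Definition restr (sigma : int -> int) (n : nat) : seq int :=
  [seq sigma (i%:Z - n%:Z) | i <- iota 0 (2 * n + 1)].

Definition nb_records_le0 (x : seq int) : nat :=
  count (fun j => all (fun y => y < nth 0 x j) (take j x) && (nth 0 x j <= 0))
        (iota 0 (size x)).

(* The subset 1^(-s) BST(x) of Y: y is in it iff 1^s y is a word of T lying
   in BST(x). *)
Definition shifted_BST (s : nat) (x : seq int) (y : Yword) : Prop :=
  (0 <= y.1 + s%:Z) /\ in_bst x (yword (absz (y.1 + s%:Z)) y.2).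

(* Main.v *)
From mathcomp Require Import zify.
Require Import Defs.
From mathcomp Require Import all_boot all_order all_algebra.
Import Order.TTheory GRing.Theory Num.Theory.
Local Open Scope ring_scope.

Definition lt_opt (b : option int) (a : int) : bool :=
  if b is Some c then c < a else true.

Fixpoint Ro (b : option int) (x : seq int) : seq int :=
  match x with
  | [::] => [::]
  | a :: t => if lt_opt b a then a :: Ro (Some a) t else Ro b t
  end.

Lemma Ro_sub b x : {subset Ro b x <= x}.
Proof.
elim: x b => [|a t IH] b //= v.
case: ifP => _; rewrite ?inE.
  by case/orP => [->//|/IH ->]; rewrite orbT.
by move/IH ->; rewrite orbT.
Qed.

Lemma Ro_all b x : all (lt_opt b) (Ro b x) && sorted <%R (Ro b x).
Proof.
elim: x b => [|a t IH] b //=.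
case: ifP => H; last exact: IH.
have /andP[H1 H2] := IH (Some a).
rewrite /= H /= path_sortedE; last exact: lt_trans.
rewrite H2 !andbT.
apply/andP; split; apply/allP => v /(allP H1) /= Hav //.
by case: b H => [c|] //= Hc; apply: lt_trans Hav.
Qed.

Lemma Ro_uniq b x : uniq (Ro b x).
Proof.
have /andP[_ H] := Ro_all b x.
by apply: sorted_uniq H; [exact: lt_trans | exact: ltxx].
Qed.

Lemma Ro_filter_aux (a u : int) t : a < u ->
  Ro (Some u) [seq y <- t | a < y] = Ro (Some u) t.
Proof.
elim: t u => [|v t IH] u Hau //=.
case: ifP => Hav /=.
  case: ifP => Huv; [by rewrite IH | by rewrite IH].
have -> : (u < v) = false.
  apply/negbTE; rewrite -leNgt; apply: le_trans (ltW Hau).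
  by rewrite leNgt Hav.
by rewrite IH.
Qed.

Lemma Ro_filter (a : int) t : Ro (Some a) t = Ro None [seq y <- t | a < y].
Proof.
elim: t => [|v t IH] //=.
case: ifP => Hav //=.
by rewrite Ro_filter_aux.
Qed.

Lemma spine_gen (n : nat) : forall (x : seq int) (c : int) (w : seq bool),
  (size x <= n)%N -> c \in Ro None x ->
  in_bst x (nseq (count (fun v => v <= c) (Ro None x)) true ++ w)
  = in_bst [seq y <- x | c < y] w.
Proof.
elim: n => [|n IH] [|a t] c w //=.
rewrite ltnS => Hs.
rewrite Ro_filter inE.
set t' := [seq y <- t | a < y].
have Ht' : forall v, v \in Ro None t' -> a < v.
  by move=> v /Ro_sub; rewrite mem_filter => /andP[].
case/orP => [/eqP Hc | Hc].
  subst c; rewrite lexx ltxx.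
  have -> : count (fun v => v <= a) (Ro None t') = 0%N.
    rewrite (eq_in_count (a2 := pred0)) ?count_pred0 //.
    by move=> v /Ht' Hv /=; rewrite leNgt Hv.
  by [].
have Hac := Ht' _ Hc.
rewrite (ltW Hac) add1n /=.
rewrite IH //; last by rewrite /t' size_filter (leq_trans (count_size _ _)).
rewrite /t' -filter_predI.
have -> : (c < a) = false by apply/negbTE; rewrite -leNgt ltW.
congr (in_bst _ w); apply: eq_filter => y /=.
by case Hcy: (c < y) => //=; rewrite (lt_trans Hac Hcy).
Qed.


Lemma nbrec_gen (x : seq int) : forall (p : seq int) (b : option int),
  (forall v, all (fun y => y < v) p = lt_opt b v) ->
  count (fun j => all (fun y => y < nth 0 x j) (p ++ take j x) && (nth 0 x j <= 0))
        (iota 0 (size x))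
  = count (fun v => v <= 0) (Ro b x).
Proof.
elim: x => [|a t IH] p b Hp //=.
rewrite -(addn0 1%N) iotaDl count_map cats0 Hp.
have Hp' : forall v, all (fun y => y < v) (rcons p a)
                     = lt_opt (if lt_opt b a then Some a else b) v.
  move=> v; rewrite all_rcons Hp.
  case Hba: (lt_opt b a) => /=.
    case Hav: (a < v) => //=.
    by case: b Hp Hba => [c|] //= _ Hca; rewrite (lt_trans Hca Hav).
  case Hbv: (lt_opt b v); rewrite ?andbF ?andbT //.
  case: b Hp Hba Hbv => [c|] //= _ /negbT; rewrite -leNgt => Hac Hcv.
  exact: le_lt_trans Hac Hcv.
have E : count (preim (addn 1)
   (fun j => all (fun y => y < nth 0 (a :: t) j) (p ++ take j (a :: t)) &&
             (nth 0 (a :: t) j <= 0))) (iota 0 (size t))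
   = count (fun j => all (fun y => y < nth 0 t j) (rcons p a ++ take j t) &&
             (nth 0 t j <= 0)) (iota 0 (size t)).
  by apply: eq_count => j /=; rewrite cat_rcons.
rewrite E (IH _ _ Hp').
by case: (lt_opt b a) => /=.
Qed.

Lemma nbrec (x : seq int) :
  nb_records_le0 x = count (fun v => v <= 0) (Ro None x).
Proof. by rewrite /nb_records_le0 -(nbrec_gen x [::]). Qed.


Lemma mem_Ro_map (f : int -> int) (J : seq int) (b : option int) (v : int) :
  sorted <%R J ->
  (v \in Ro b (map f J)) <->
  (exists i, [/\ i \in J, v = f i, lt_opt b (f i) &
              forall j, j \in J -> j < i -> f j < f i]).
Proof.
elim: J b => [|a J IH] b /=.
  by move=> _; split => // -[i []].
rewrite path_sortedE; last exact: lt_trans.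
case/andP => /allP HaJ HJ.
case: ifP => Hba; rewrite ?inE.
  split.
    case/orP => [/eqP -> | /(IH _ HJ) [i [Hi Hv Hlt Hj]]].
      exists a; split => //; first by rewrite inE eqxx.
      move=> j; rewrite inE => /orP [/eqP -> | /HaJ Haj]; first by rewrite ltxx.
      by move=> Hja; have := lt_trans Haj Hja; rewrite ltxx.
    exists i; split => //; first by rewrite inE Hi orbT.
      by case: b Hba => [c|] //= Hc; apply: lt_trans Hlt.
    move=> j; rewrite inE => /orP [/eqP -> | Hj']; first by [].
    exact: Hj.
  case=> i [Hi Hv Hlt Hj].
  move: Hi; rewrite inE => /orP [/eqP Hia | Hi].
    by rewrite Hv Hia eqxx.
  apply/orP; right; apply/(IH _ HJ).
  have Hai := HaJ _ Hi.
  exists i; split => //=.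
    by apply: Hj => //; rewrite inE eqxx.
  by move=> j Hj' Hji; apply: Hj => //; rewrite inE Hj' orbT.
split.
  move=> /(IH _ HJ) [i [Hi Hv Hlt Hj]].
  exists i; split => //; first by rewrite inE Hi orbT.
  move=> j; rewrite inE => /orP [/eqP -> | Hj']; last exact: Hj.
  move=> _; case: b Hba Hlt => [c|] //= /negbT; rewrite -leNgt => Hac Hci.
  exact: le_lt_trans Hac Hci.
case=> i [Hi Hv Hlt Hj].
move: Hi; rewrite inE => /orP [/eqP Hia | Hi].
  by move: Hlt; rewrite Hia Hba.
apply/(IH _ HJ); exists i; split => //.
by move=> j Hj' Hji; apply: Hj => //; rewrite inE Hj' orbT.
Qed.

Definition Jn (n : nat) : seq int := [seq i%:Z - n%:Z | i <- iota 0 (2 * n + 1)].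

Lemma restrE sigma n : restr sigma n = map sigma (Jn n).
Proof. by rewrite /restr /Jn -map_comp. Qed.

Lemma Jn_sorted n : sorted <%R (Jn n).
Proof.
rewrite /Jn sorted_map.
apply: (sub_sorted _ (iota_ltn_sorted 0 _)) => i j /= H.
rewrite ltrD2r ltz_nat; exact: H.
Qed.

Lemma mem_Jn n i : (i \in Jn n) = (`|i| <= n)%N.
Proof.
apply/mapP/idP.
  case=> m; rewrite mem_iota => /andP[_ Hm] ->; lia.
move=> H; exists (absz (i + n%:Z)%R); first by rewrite mem_iota; lia.
lia.
Qed.

Definition bnd (f : int -> nat) (s : seq int) : nat :=
  foldr (fun x acc => maxn (f x) acc) 0%N s.

Lemma bnd_ge f s x : x \in s -> (f x <= bnd f s)%N.
Proof.
elim: s => [|a s IH] //=; rewrite inE => /orP [/eqP -> | /IH H].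
  exact: leq_maxl.
exact: (leq_trans H (leq_maxr _ _)).
Qed.


Lemma r_mono (r : int -> int) : (forall k, r k < r (k + 1)) ->
  forall k l, k <= l -> r k <= r l.
Proof.
move=> Hr.
have H : forall (d : nat) k, r k <= r (k + d%:Z).
  elim=> [|d IH] k; first by rewrite addr0.
  apply: (le_trans (IH k)).
  have -> : k + (d.+1)%:Z = (k + d%:Z) + 1 by lia.
  exact: ltW.
move=> k l Hkl.
have -> : l = k + (absz (l - k))%:Z by lia.
exact: H.
Qed.

Lemma consec (sigma r : int -> int) : std_record_rep sigma r ->
  forall k j, j < r (k + 1) -> sigma j <= sigma (r k).
Proof.
case=> Hr [Hrec [Hsurj _]] k.
have Hm := @r_mono r Hr.
have H : forall (d : nat) j, r k < j -> j <= r k + d%:Z -> j < r (k + 1) ->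
           sigma j <= sigma (r k).
  elim=> [|d IH] j H1 H2 H3; first by lia.
  have [H4|H4] := leP j (r k + d%:Z); first exact: IH.
  rewrite leNgt; apply/negP => Hlt.
  have Hj : is_record_index sigma j.
    move=> i Hi.
    have [Hik|Hik] := leP i (r k).
      apply: le_lt_trans Hlt.
      have [Hik'|Hik'] := ltP i (r k); first exact: ltW (Hrec k i Hik').
      by have -> : i = r k by lia.
    apply: le_lt_trans Hlt; apply: IH => //; lia.
  have [m Hmj] := Hsurj j Hj.
  have Hkm : k < m.
    rewrite ltNge; apply/negP => /Hm; lia.
  have Hmk : m < k + 1.
    rewrite ltNge; apply/negP => /Hm; lia.
  lia.
move=> j Hj.
have [Hjk|Hjk] := leP j (r k).
  have [Hjk'|Hjk'] := ltP j (r k); first exact: ltW (Hrec k j Hjk').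
  by have -> : j = r k by lia.
apply: (H (absz (j - r k))) => //; lia.
Qed.


Lemma count_split (A : seq int) (lo hi : int) : lo <= hi ->
  count (fun v => v <= hi) A
  = addn (count (fun v => v <= lo) A) (count (fun v => lo < v <= hi) A).
Proof.
move=> H; elim: A => [|v A IH] //=; rewrite IH.
case: (leP v lo) => H1; case: (leP v hi) => H2 /=; try lia.
Qed.

Lemma Cstep sigma r n k : std_record_rep sigma r ->
  r (k + 1) \in Jn n ->
  count (fun v => v <= sigma (r (k + 1))) (Ro None (map sigma (Jn n)))
  = addn (count (fun v => v <= sigma (r k)) (Ro None (map sigma (Jn n)))) 1.
Proof.
move=> Hstd HJ.
have [Hr [Hrec _]] := Hstd.
have Hlohi : sigma (r k) < sigma (r (k + 1)) by apply: Hrec; apply: Hr.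
rewrite (@count_split _ _ _ (ltW Hlohi)); congr addn.
set A := Ro None _.
have HA : sigma (r (k + 1)) \in A.
  apply/(@mem_Ro_map sigma (Jn n) None _ (Jn_sorted n)).
  exists (r (k + 1)); split => // j _; exact: Hrec.
rewrite -(_ : nat_of_bool (sigma (r (k + 1)) \in A) = 1%N); last by rewrite HA.
rewrite -count_uniq_mem; last exact: Ro_uniq.
apply: eq_in_count => v /(@mem_Ro_map sigma (Jn n) None _ (Jn_sorted n)) [i [Hi -> _ Hj]] /=.
apply/idP/eqP.
  case/andP => H1 H2.
  have Hi1 : r (k + 1) <= i.
    rewrite leNgt; apply/negP => /(@consec sigma r Hstd k i); by rewrite leNgt H1.
  have [Hlt|Hge] := ltP (r (k + 1)) i.
    by have := Hj _ HJ Hlt; rewrite ltNge H2.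
  by have -> : i = r (k + 1) by lia.
by move=> ->; rewrite Hlohi lexx.
Qed.

Lemma C0 sigma r n : std_record_rep sigma r ->
  r 1 \in Jn n ->
  count (fun v => v <= 0) (Ro None (map sigma (Jn n)))
  = count (fun v => v <= sigma (r 0)) (Ro None (map sigma (Jn n))).
Proof.
move=> Hstd HJ.
have [Hr [Hrec [_ /andP [H0 H1]]]] := Hstd.
rewrite (@count_split _ _ _ H0).
rewrite -[RHS]addn0; congr addn.
rewrite -(count_pred0 (Ro None (map sigma (Jn n)))).
apply: eq_in_count => v /(@mem_Ro_map sigma (Jn n) None _ (Jn_sorted n)) [i [Hi -> _ Hj]] /=.
apply/negP => /andP [H2 H3].
have Hi1 : r 1 <= i.
  rewrite leNgt; apply/negP => Hlt.
  have := @consec sigma r Hstd 0 i; rewrite add0r => /(_ Hlt).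
  by rewrite leNgt H2.
have [Hlt|Hge] := ltP (r 1) i.
  have := Hj _ HJ Hlt => H4.
  have := lt_le_trans (lt_trans H1 H4) H3; by rewrite ltxx.
have Hir : i = r 1 by lia.
by move: H3; rewrite Hir leNgt H1.
Qed.

Lemma cnt_formula sigma r n (B : nat) : std_record_rep sigma r ->
  (forall k, (`|k| <= B.+1)%N -> r k \in Jn n) ->
  forall k, (`|k| <= B)%N ->
  (count (fun v => v <= sigma (r k)) (Ro None (map sigma (Jn n))))%:Z
  = (count (fun v => v <= 0) (Ro None (map sigma (Jn n))))%:Z + k.
Proof.
move=> Hstd HJ.
set c := fun k => count (fun v => v <= sigma (r k)) (Ro None (map sigma (Jn n))).
set c0 := count _ _.
have H : forall d : nat, (d <= B)%N ->
   (c d%:Z)%:Z = c0%:Z + d%:Z /\ (c (- d%:Z))%:Z = c0%:Z - d%:Z.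
  elim=> [|d IH] HdB.
    rewrite /c /c0 (@C0 sigma r n Hstd) ?oppr0 ?addr0 //; apply: HJ; lia.
  have [IH1 IH2] := IH (ltnW HdB).
  split.
    have := @Cstep sigma r n (d%:Z) Hstd.
    have -> : d%:Z + 1 = (d.+1)%:Z by lia.
    move=> /(_ (HJ _ _)); rewrite /c /c0 in IH1 * => ->; last by lia.
    lia.
  have := @Cstep sigma r n (- (d.+1)%:Z) Hstd.
  have -> : - (d.+1)%:Z + 1 = - d%:Z by lia.
  move=> /(_ (HJ _ _)); rewrite /c /c0 in IH2 *; last by lia.
move=> k Hk.
have [Hk0|Hk0] := leP 0 k.
  have -> : k = (absz k)%:Z by lia.
  by apply: (proj1 (H _ _)); lia.
have -> : k = - (absz k)%:Z by lia.
by apply: (proj2 (H _ _)); lia.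
Qed.


Theorem proposition2p5 (sigma : int -> int) (r : int -> int) :
  bijective sigma -> admissible sigma -> std_record_rep sigma r ->
  forall I : seq int,
  exists n0 : nat, forall n : nat, (n0 <= n)%N ->
    forall y : Yword, y.1 \in I ->
      (RBST sigma r y <->
       shifted_BST (nb_records_le0 (restr sigma n)) (restr sigma n) y).
Proof.
move=> [g Hg1 Hg2] _ Hstd I.
have [Hr [Hrec _]] := Hstd.
set B := bnd (fun k => absz k) I.
set M := fun k => (absz (sigma (r k)) + absz (sigma (r (k + 1)%R)))%N.
exists (bnd (fun k => absz (r k)) (Jn B.+1)
        + bnd (fun k => bnd (fun v => absz (g v)) (Jn (M k))) I)%N.
move=> n Hn [k o] /= HkI.
have HJr : forall k', (`|k'| <= B.+1)%N -> r k' \in Jn n.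
  move=> k' Hk'; rewrite mem_Jn.
  apply: leq_trans Hn; apply: leq_trans (leq_addr _ _).
  by apply: bnd_ge; rewrite mem_Jn.
have HkB : (`|k| <= B)%N by apply: bnd_ge.
have HJv : forall i, sigma (r k) < sigma i < sigma (r (k + 1)) -> i \in Jn n.
  move=> i /andP [H1 H2]; rewrite mem_Jn.
  apply: leq_trans Hn; apply: leq_trans (leq_addl _ _).
  apply: leq_trans (@bnd_ge (fun k => bnd (fun v => absz (g v)) (Jn (M k))) I k HkI).
  rewrite -{1}(Hg1 i); apply: bnd_ge.
  rewrite mem_Jn /M; lia.
rewrite /shifted_BST restrE nbrec /=.
have Hc := @cnt_formula sigma r n B Hstd HJr k HkB.
set A := Ro None (map sigma (Jn n)) in Hc *.
set m := count (fun v => v <= sigma (r k)) A in Hc.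
have -> : k + (count (fun v => v <= 0) A)%:Z = m%:Z by lia.
have HcA : sigma (r k) \in A.
  apply/(@mem_Ro_map sigma (Jn n) None _ (Jn_sorted n)).
  exists (r k); split => //; last by move=> j _; apply: Hrec.
  by apply: HJr; lia.
rewrite /yword (@spine_gen (size (map sigma (Jn n)))) // filter_map.
set J' := filter _ (Jn n).
have HJ'sorted : sorted <%R J' by apply: sorted_filter; [exact: lt_trans | exact: Jn_sorted].
have HrJ' : r (k + 1) \in J'.
  rewrite mem_filter /= HJr ?andbT; last by lia.
  by apply: Hrec.
have [a [J'' HJ'e]] : exists a J'', J' = a :: J''.
  by move: HrJ'; case: (J') => [|a J''] //; exists a, J''.
have Ha : a = r (k + 1).
  have HaJ' : a \in J' by rewrite HJ'e inE eqxx.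
  move: HaJ'; rewrite mem_filter /= => /andP [Ha1 _].
  have Ha2 : r (k + 1) <= a.
    rewrite leNgt; apply/negP => /(@consec sigma r Hstd k a).
    by rewrite leNgt Ha1.
  move: HJ'sorted HrJ'; rewrite HJ'e /= path_sortedE; last exact: lt_trans.
  case/andP => /allP Hall _; rewrite inE => /orP [/eqP -> //| /Hall H].
  by move: (lt_le_trans H Ha2); rewrite ltxx.
rewrite HJ'e /=.
case: o => [w|] /=; last by split.
rewrite filter_map.
set idxn := filter _ J''.
have Hmem : forall i, (i \in idxn) = (sigma (r k) < sigma i < sigma (r (k + 1))).
  move=> i; rewrite mem_filter /= -Ha.
  apply/idP/idP.
    case/andP => H1 H2.
    have : i \in J' by rewrite HJ'e inE H2 orbT.
    by rewrite mem_filter /= => /andP [-> _]; rewrite H1.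
  move=> Hi; have HiJ : i \in Jn n by apply: HJv; rewrite -Ha.
  case/andP: Hi => Hi1 Hi2.
  have : i \in J' by rewrite mem_filter /= Hi1 HiJ.
  rewrite HJ'e inE => /orP [/eqP Hia | ->]; last by rewrite Hi2.
  by move: Hi2; rewrite Hia Ha ltxx.
have Hsorted : sorted <%R idxn.
  apply: sorted_filter; first exact: lt_trans.
  move: HJ'sorted; rewrite HJ'e /= path_sortedE; last exact: lt_trans.
  by case/andP.
split.
  case=> xs [[idx [Hs [Hm Hxs]]] Hb]; subst xs.
  have E : idx = idxn.
    apply: (irr_sorted_eq lt_trans ltxx) => // i.
    by rewrite Hm Hmem.
  by rewrite -E; split.
case=> _ Hb.
exists (map sigma idxn); split => //.
exists idxn; split => //; split => // i; exact: Hmem.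
Qed.
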